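(* Let $R$ be a commutative ring with $\mathbb{Q}\subseteq R$. Let $\mathcal{E}$ (resp. $\mathcal{F}$) be a finitely generated projective module over a commutative unital $R$-algebra $\mathcal{A}$ (resp. $\mathcal{B}$), with a symmetric, strongly nondegenerate, full inner product $\langle\cdot,\cdot\rangle_{\mathcal{E}}$ (resp. $\langle\cdot,\cdot\rangle_{\mathcal{F}}$). Let $m\in\mathcal{C}^3(\mathcal{E})$ be a Courant algebroid structure on $\mathcal{E}$. Let $\Phi:\mathcal{C}^\bullet(\mathcal{E})\to\mathcal{C}^\bullet(\mathcal{F})$ be a morphism of graded Poisson algebras, i.e. a homogeneous $R$-linear map of degree $0$ compatible with the products $\wedge$ and the brackets $[\cdot,\cdot]$, and write $\Phi_k=\Phi|_{\mathcal{C}^k(\mathcal{E})}$. Then: (i) $m'=\Phi(m)$ is a Courant algebroid structure on $\mathcal{F}$; (ii) $(\Phi_0,\Phi_1)$ is a morphism of Courant algebroids from $(\mathcal{E},m)$ to $(\mathcal{F},m')$; (iii) $\Phi$ induces a morphism $H^\bullet(\mathcal{C}(\mathcal{E}),\delta_m)\to H^\bullet(\mathcal{C}(\mathcal{F}),\delta_{m'})$ of cohomologies.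
   Context: Strongly nondegenerate: $\mathcal{E}\to\operatorname{Hom}_{\mathcal{A}}(\mathcal{E},\mathcal{A})$ is an isomorphism. Full: every element of the algebra is a finite sum $\sum_i\langle x_i,y_i\rangle$. $\operatorname{Der}(\mathcal{A})$: $R$-linear derivations. $\mathcal{C}^0(\mathcal{E})=\mathcal{A}$ and $\mathcal{C}^1(\mathcal{E})=\mathcal{E}$. For $r\ge2$, $\mathcal{C}^r(\mathcal{E})$ is the set of $\mathsf{C}\in\operatorname{Hom}_R(\mathcal{E}^{\otimes_R(r-1)},\mathcal{E})$ admitting an $R$-multilinear symbol $\sigma_{\mathsf{C}}:\mathcal{E}^{\otimes(r-2)}\to\operatorname{Der}(\mathcal{A})$ with two properties: (1) $\sigma_{\mathsf{C}}(x_1,\dots,x_{r-2})\langle u,w\rangle=\langle\mathsf{C}(x_1,\dots,x_{r-2},u),w\rangle+\langle u,\mathsf{C}(x_1,\dots,x_{r-2},w)\rangle$; (2) for $r\ge3$ and $1\le i\le r-2$, $\langle\mathsf{C}(\dots,x_i,x_{i+1},\dots)+\mathsf{C}(\dots,x_{i+1},x_i,\dots),u\rangle=\sigma_{\mathsf{C}}(x_1,\dots,\widehat{x_i},\widehat{x_{i+1}},\dots,x_{r-1},u)\langle x_i,x_{i+1}\rangle$. The same definitions apply to $\mathcal{F}$ over $\mathcal{B}$. $i_x\mathsf{C}$ inserts $x$ in the first argument. $[\cdot,\cdot]$ is the unique $R$-bilinear graded skew-symmetric map $\mathcal{C}^r\times\mathcal{C}^s\to\mathcal{C}^{r+s-2}$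 with: - $[a,b]=0$ and $[a,x]=0=[x,a]$; - $[x,y]=\langle x,y\rangle$; - $[\mathsf{D},a]=\sigma_{\mathsf{D}}(a)=-[a,\mathsf{D}]$ for $\mathsf{D}\in\mathcal{C}^2$; - $[\mathsf{C},x]=i_x\mathsf{C}=(-1)^{r+1}[x,\mathsf{C}]$ for $r\ge2$; - $[[\mathsf{C}_1,\mathsf{C}_2],x]=(-1)^s[[\mathsf{C}_1,x],\mathsf{C}_2]+[\mathsf{C}_1,[\mathsf{C}_2,x]]$. $\wedge$ is the unique degree-$0$ product with $a\wedge b=ab$, $a\wedge x=ax=x\wedge a$, and $[\mathsf{C}_1\wedge\mathsf{C}_2,x]=(-1)^s[\mathsf{C}_1,x]\wedge\mathsf{C}_2+\mathsf{C}_1\wedge[\mathsf{C}_2,x]$. These make $\mathcal{C}^\bullet$ a graded Poisson algebra of degree $-2$. A Courant algebroid structure on $\mathcal{E}$ is an element $m\in\mathcal{C}^3(\mathcal{E})$, i.e. a bracket $m:\mathcal{E}\otimes_R\mathcal{E}\to\mathcal{E}$ with anchor $\sigma_m:\mathcal{E}\to\operatorname{Der}(\mathcal{A})$, satisfying the Jacobi identity $m(x,m(y,z))=m(m(x,y),z)+m(y,m(x,z))$. Equivalently, $m\in\mathcal{C}^3(\mathcal{E})$ with $[m,m]=0$. Then $\delta_m=[m,\cdot]$ satisfies $\delta_m^2=0$, and $H^\bullet(\mathcal{C}(\mathcal{E}),\delta_m)$ denotes the cohomology of $(\mathcal{C}^\bullet(\mathcal{E}),\delta_m)$. A morphism of Courant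 algebroids $(\mathcal{E}_1,[\cdot,\cdot]_1,\sigma_1)\to(\mathcal{E}_2,[\cdot,\cdot]_2,\sigma_2)$ over $\mathcal{A}_1,\mathcal{A}_2$ is a pair of $R$-linear maps $(\phi:\mathcal{A}_1\to\mathcal{A}_2,\ \psi:\mathcal{E}_1\to\mathcal{E}_2)$ satisfying, for all $a,b\in\mathcal{A}_1$ and $x,y\in\mathcal{E}_1$: - $\phi(ab)=\phi(a)\phi(b)$; - $\psi(ax)=\phi(a)\psi(x)$; - $\psi([x,y]_1)=[\psi(x),\psi(y)]_2$; - $\phi(\sigma_1(x)a)=\sigma_2(\psi(x))\phi(a)$; - $\phi(\langle x,y\rangle_1)=\langle\psi(x),\psi(y)\rangle_2$. *)

(* Defs.v *)
From mathcomp Require Import all_boot all_algebra.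
Set Implicit Arguments. Unset Strict Implicit. Unset Printing Implicit Defensive.
Import GRing.Theory.
Local Open Scope ring_scope.

Section Cochains.
Variables (R : comNzRingType) (A : comAlgType R) (E : lmodType A).

Definition scE (r : R) (x : E) : E := r%:A *: x.

(* finitely generated projective A-module: a retract of some A^n *)
Definition fg_projective : Prop :=
  exists (n : nat) (f : E -> 'rV[A]_n) (g : 'rV[A]_n -> E),
    [/\ (forall (a : A) x y, f (a *: x + y) = a *: f x + f y),
        (forall (a : A) u v, g (a *: u + v) = a *: g u + g v) &
        cancel f g].

Definition good_inner_product (ip : E -> E -> A) : Prop :=
  [/\ (forall (a : A) x y z, ip (a *: x + y) z = a * ip x z + ip y z),
      (forall x y, ip x y = ip y x),
      (* strong nondegeneracy: x |-> <x, .> is a bijection E -> Hom_A(E, A) *)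
      (forall x x', (forall y, ip x y = ip x' y) -> x = x'),
      (forall phi : E -> A, (forall (a : A) y z, phi (a *: y + z) = a * phi y + phi z) ->
         exists x, forall y, phi y = ip x y) &
      (forall a : A, exists s : seq (E * E), a = \sum_(p <- s) ip p.1 p.2)].

Definition isDer (D : A -> A) : Prop :=
  (forall (r : R) (a b : A), D (r *: a + b) = r *: D a + D b) /\
  (forall a b : A, D (a * b) = D a * b + a * D b).

Definition multilinR (W : zmodType) (scW : R -> W -> W) (n : nat) (f : seq E -> W) : Prop :=
  forall (s1 s2 : seq E) (x y : E) (r : R), (size s1 + size s2).+1 = n ->
    f (s1 ++ (scE r x + y) :: s2) = scW r (f (s1 ++ x :: s2)) + f (s1 ++ y :: s2).

(* A (homogeneous) cochain: the component c0 carries degree 0 (elements of A),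
   c1 degree 1 (elements of E), cf degree r >= 2 (maps E^(r-1) -> E). *)
Record cochain := Cochain { c0 : A; c1 : E; cf : seq E -> E }.

Definition zeroC : cochain := Cochain 0 0 (fun _ => 0).
Definition mk0 (a : A) : cochain := Cochain a 0 (fun _ => 0).
Definition mk1 (x : E) : cochain := Cochain 0 x (fun _ => 0).
Definition addC (u v : cochain) : cochain :=
  Cochain (c0 u + c0 v) (c1 u + c1 v) (fun s => cf u s + cf v s).
Definition scaleC (r : R) (u : cochain) : cochain :=
  Cochain (r *: c0 u) (scE r (c1 u)) (fun s => scE r (cf u s)).

Variable ip : E -> E -> A.

Definition isSymbol (r : nat) (C : seq E -> E) (sigma : seq E -> A -> A) : Prop :=
  [/\ (forall s, size s = (r - 2)%N -> isDer (sigma s)),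
      (forall a : A, multilinR (fun k (b : A) => k *: b) (r - 2) (fun s => sigma s a)),
      (forall s u w, size s = (r - 2)%N ->
         sigma s (ip u w) = ip (C (rcons s u)) w + ip u (C (rcons s w))) &
      (forall s1 s2 x y u, (size s1 + size s2 + 2 = r - 1)%N ->
         ip (C (s1 ++ x :: y :: s2) + C (s1 ++ y :: x :: s2)) u
         = sigma (s1 ++ s2 ++ [:: u]) (ip x y))].

Definition inC (k : nat) (c : cochain) : Prop :=
  match k with
  | 0 => c1 c = 0 /\ forall s, cf c s = 0
  | 1 => c0 c = 0 /\ forall s, cf c s = 0
  | k'.+2 =>
      [/\ c0 c = 0, c1 c = 0,
          (forall s, size s != k'.+1 -> cf c s = 0),
          multilinR scE k'.+1 (cf c) &
          exists sigma, isSymbol k (cf c) sigma]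
  end.

Definition ins (r : nat) (x : E) (C : cochain) : cochain :=
  if r == 2%N then mk1 (cf C [:: x])
  else Cochain 0 0 (fun s => cf C (x :: s)).

Definition sgn (n : nat) : R := (-1) ^+ n.

Definition bilinearOn (op : nat -> nat -> cochain -> cochain -> cochain) : Prop :=
  (forall r s c c' d (k : R), inC r c -> inC r c' -> inC s d ->
     op r s (addC (scaleC k c) c') d = addC (scaleC k (op r s c d)) (op r s c' d)) /\
  (forall r s c d d' (k : R), inC r c -> inC s d -> inC s d' ->
     op r s c (addC (scaleC k d) d') = addC (scaleC k (op r s c d)) (op r s c d')).

(* br satisfies the defining properties of the bracket [.,.] of C^.(E)
   (degree r+s-2 is truncated; the degree -2, -1 cases are forced to be 0) *)
Definition isBracket (br : nat -> nat -> cochain -> cochain -> cochain) : Prop :=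
  [/\ (forall r s c d, inC r c -> inC s d -> inC (r + s - 2) (br r s c d)),
      bilinearOn br &
      (forall r s c d, inC r c -> inC s d ->
         br r s c d = scaleC (- sgn (r * s)) (br s r d c))] /\
  [/\
      (forall a b x, [/\ br 0%N 0%N (mk0 a) (mk0 b) = zeroC,
                         br 0%N 1%N (mk0 a) (mk1 x) = zeroC &
                         br 1%N 0%N (mk1 x) (mk0 a) = zeroC]),
      (forall x y, br 1%N 1%N (mk1 x) (mk1 y) = mk0 (ip x y)),
      (forall D sigma a, inC 2 D -> isSymbol 2 (cf D) sigma ->
         br 2%N 0%N D (mk0 a) = mk0 (sigma [::] a) /\
         br 0%N 2%N (mk0 a) D = mk0 (- sigma [::] a)),
      (forall r C x, (2 <= r)%N -> inC r C ->
         br r 1%N C (mk1 x) = ins r x C /\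
         br 1%N r (mk1 x) C = scaleC (sgn r.+1) (ins r x C)) &
      (forall r s C1 C2 x, inC r C1 -> inC s C2 ->
         br (r + s - 2)%N 1%N (br r s C1 C2) (mk1 x)
         = addC (scaleC (sgn s) (br (r + 1 - 2)%N s (br r 1%N C1 (mk1 x)) C2))
                (br r (s + 1 - 2)%N C1 (br s 1%N C2 (mk1 x))))].

Definition isWedge (br wd : nat -> nat -> cochain -> cochain -> cochain) : Prop :=
  [/\ (forall r s c d, inC r c -> inC s d -> inC (r + s) (wd r s c d)),
      bilinearOn wd,
      (forall a b x, [/\ wd 0%N 0%N (mk0 a) (mk0 b) = mk0 (a * b),
                         wd 0%N 1%N (mk0 a) (mk1 x) = mk1 (a *: x) &
                         wd 1%N 0%N (mk1 x) (mk0 a) = mk1 (a *: x)]) &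
      (forall r s C1 C2 x, inC r C1 -> inC s C2 ->
         br (r + s)%N 1%N (wd r s C1 C2) (mk1 x)
         = addC (scaleC (sgn s) (wd (r + 1 - 2)%N s (br r 1%N C1 (mk1 x)) C2))
                (wd r (s + 1 - 2)%N C1 (br s 1%N C2 (mk1 x))))].

Definition isCourant (m : cochain) : Prop :=
  inC 3 m /\
  forall x y z, cf m [:: x; cf m [:: y; z]]
                = cf m [:: cf m [:: x; y]; z] + cf m [:: y; cf m [:: x; z]].

End Cochains.

Arguments zeroC {R A E}.

Section Morphisms.
Variables (R : comNzRingType) (A B : comAlgType R) (E : lmodType A) (F : lmodType B).
Variables (ipE : E -> E -> A) (ipF : F -> F -> B).

(* morphism of Courant algebroids (E, m) -> (F, m'); the anchors are the
   symbols of m and m' (unique by fullness) *)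
Definition isCourantMorphism (m : cochain E) (m' : cochain F)
  (phi : A -> B) (psi : E -> F) : Prop :=
  [/\ (forall (r : R) a b, phi (r *: a + b) = r *: phi a + phi b),
      (forall (r : R) x y, psi (scE r x + y) = scE r (psi x) + psi y) &
      (forall a b, phi (a * b) = phi a * phi b)] /\
  [/\
      (forall a x, psi (a *: x) = phi a *: psi x),
      (forall x y, psi (cf m [:: x; y]) = cf m' [:: psi x; psi y]),
      (forall sigma sigma', isSymbol ipE 3 (cf m) sigma -> isSymbol ipF 3 (cf m') sigma' ->
         forall x a, phi (sigma [:: x] a) = sigma' [:: psi x] (phi a)) &
      (forall x y, phi (ipE x y) = ipF (psi x) (psi y))].

Definition isGPMorphism (brE wdE : nat -> nat -> cochain E -> cochain E -> cochain E)
  (brF wdF : nat -> nat -> cochain F -> cochain F -> cochain F)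
  (Phi : nat -> cochain E -> cochain F) : Prop :=
  [/\ (forall k c, inC ipE k c -> inC ipF k (Phi k c)),
      (forall k c c' (r : R), inC ipE k c -> inC ipE k c' ->
         Phi k (addC (scaleC r c) c') = addC (scaleC r (Phi k c)) (Phi k c')),
      (forall r s c d, inC ipE r c -> inC ipE s d ->
         Phi (r + s)%N (wdE r s c d) = wdF r s (Phi r c) (Phi s d)) &
      (forall r s c d, inC ipE r c -> inC ipE s d ->
         Phi (r + s - 2)%N (brE r s c d) = brF r s (Phi r c) (Phi s d))].

End Morphisms.

(* Main.v *)
Require Import Defs.
From mathcomp Require Import all_boot all_algebra.
From Stdlib Require Import FunctionalExtensionality.
Set Implicit Arguments. Unset Strict Implicit. Unset Printing Implicit Defensive.
Import GRing.Theory.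
Local Open Scope ring_scope.

Section Gen.
Variables (R : comNzRingType) (A : comAlgType R) (E : lmodType A) (ip : E -> E -> A)
  (br : nat -> nat -> cochain E -> cochain E -> cochain E).
Hypothesis HB : isBracket ip br.

Lemma mk1_in x : inC ip 1 (mk1 x). Proof. by split. Qed.
Lemma mk0_in a : inC ip 0 (mk0 E a). Proof. by split. Qed.

Lemma cl r s c d k : k = (r+s-2)%N -> inC ip r c -> inC ip s d -> inC ip k (br r s c d).
Proof. case: HB => [[Hcl _ _] _] ->; exact: Hcl. Qed.

Lemma brx r C x s : (2 < r)%N -> inC ip r C -> cf (br r 1 C (mk1 x)) s = cf C (x::s).
Proof.
move=> hr hC; case: HB => _ [_ _ _ Hins _].
by rewrite (Hins r C x (ltnW hr) hC).1 /ins (gtn_eqF hr).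
Qed.

Lemma br2x C x : inC ip 2 C -> br 2 1 C (mk1 x) = mk1 (cf C [::x]).
Proof. move=> hC; case: HB => _ [_ _ _ Hins _]. by rewrite (Hins 2%N C x (leqnn 2) hC).1. Qed.

Lemma br1x r C x : (2 <= r)%N -> inC ip r C -> br 1 r (mk1 x) C = scaleC (sgn R r.+1) (ins r x C).
Proof. move=> hr hC; case: HB => _ [_ _ _ Hins _]. by rewrite (Hins r C x hr hC).2. Qed.

Lemma cf2 C z : inC ip 2 C -> cf C [::z] = c1 (br 2 1 C (mk1 z)).
Proof. by move=> hC; rewrite br2x. Qed.

Lemma leib r s C1 C2 x rs r1 s1 : rs = (r+s-2)%N -> r1 = (r+1-2)%N -> s1 = (s+1-2)%N ->
  inC ip r C1 -> inC ip s C2 -> br rs 1 (br r s C1 C2) (mk1 x) =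
  Defs.addC (scaleC (sgn R s) (br r1 s (br r 1 C1 (mk1 x)) C2)) (br r s1 C1 (br s 1 C2 (mk1 x))).
Proof. case: HB => _ [_ _ _ _ Hl] -> -> ->; exact: Hl. Qed.

Lemma sgn2 : sgn R 2 = 1. Proof. by rewrite /sgn !exprS expr0 !mulN1r opprK. Qed.
Lemma sgn3 : sgn R 3 = -1. Proof. by rewrite /sgn !exprS expr0 !mulN1r !opprK. Qed.
Lemma sgn4 : sgn R 4 = 1. Proof. by rewrite /sgn !exprS expr0 !mulN1r !opprK. Qed.
Lemma scE1 (v : E) : scE 1 v = v. Proof. by rewrite /scE scale1r scale1r. Qed.
Lemma scEN1 (v : E) : scE (-1) v = - v. Proof. by rewrite /scE scaleN1r scaleN1r. Qed.

Lemma DD D1 D2 z : inC ip 2 D1 -> inC ip 2 D2 ->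
  cf (br 2 2 D1 D2) [::z] = - cf D2 [:: cf D1 [::z]] + cf D1 [:: cf D2 [::z]].
Proof.
move=> h1 h2; rewrite cf2; last exact: cl.
rewrite (@leib 2 2 D1 D2 z 2 1 1) //= !br2x // br1x //= sgn2 sgn3 scE1 scEN1.
by rewrite /ins /=.
Qed.

Lemma Lm m x y z : inC ip 3 m ->
  let J := cf m [:: cf m [:: x;y]; z] + cf m [:: y; cf m [:: x; z]] - cf m [:: x; cf m [:: y; z]] in
  cf (br 3 3 m m) [:: x; y; z] = J + J.
Proof.
move=> hm J.
have hD : forall w, inC ip 2 (br 3 1 m (mk1 w)) by move=> w; apply: cl => //; apply: mk1_in.
have cfD : forall w s, cf (br 3 1 m (mk1 w)) s = cf m (w :: s) by move=> w s; apply: brx.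
rewrite -(@brx 4 _ x) //; last exact: cl.
rewrite (@leib 3 3 m m x 4 2 2) //=.
rewrite -(@brx 3 _ y) //; last by apply: cl.
rewrite -(@brx 3 (br 3 2 _ _) y) //; last by apply: cl.
rewrite (@leib 2 3 _ m y 3 1 2 erefl erefl erefl (hD x) hm) /=.
rewrite (@leib 3 2 m (br 3 1 m (mk1 x)) y 3 2 1 erefl erefl erefl hm (hD x)) /=.
rewrite (br2x _ (hD x)) (@br1x 3 m _ isT hm) /=.
rewrite (DD _ (hD x) (hD y)) (DD _ (hD y) (hD x)).
rewrite !cfD sgn2 sgn3 sgn4 !scE1 !scEN1 /J.
set a := cf m [:: cf m [:: x; y]; z].
set b := cf m [:: y; cf m [:: x; z]].
set c := cf m [:: x; cf m [:: y; z]].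
rewrite !opprD !opprK.
by rewrite [- c + b]addrC [b - c + a]addrC !addrA.
Qed.

Lemma eta0 c : inC ip 0 c -> c = mk0 E (c0 c).
Proof.
case: c => a x f [/= -> hf]; rewrite /mk0; f_equal.
by apply: functional_extensionality => s; rewrite hf.
Qed.

Lemma eta1 c : inC ip 1 c -> c = mk1 (c1 c).
Proof.
case: c => a x f [/= -> hf]; rewrite /mk1; f_equal.
by apply: functional_extensionality => s; rewrite hf.
Qed.

Lemma brins3 m x : inC ip 3 m -> br 3 1 m (mk1 x) = ins 3 x m.
Proof. move=> hm; case: HB => _ [_ _ _ Hins _]. exact: (Hins 3%N m x isT hm).1. Qed.

Lemma zero_eval M : inC ip 4 M -> (forall x y z, cf M [:: x; y; z] = 0) -> M = zeroC.
Proof.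
case: M => a x f [/= -> -> hs _ _] h; rewrite /zeroC; f_equal.
apply: functional_extensionality => s.
case: s hs => [|x1 [|x2 [|x3 [|x4 s]]]] hs; try by rewrite hs.
exact: h.
Qed.

Lemma sym_ins C sigma x : isSymbol ip 3 C sigma ->
  isSymbol ip 2 (fun s => C (x :: s)) (fun s => sigma (x :: s)).
Proof.
case=> h1 h2 h3 h4; split.
- by move=> s hs; apply: h1; rewrite /= hs.
- by move=> a s1 s2 x0 y r /eqP.
- by move=> s u w hs; rewrite (h3 (x :: s)) //= hs.
- by move=> s1 s2 x0 y u; rewrite addn2 => /eqP.
Qed.
End Gen.

Lemma self_add0 (V : zmodType) (v : V) : v = v + v -> v = 0.
Proof. by move=> h; apply/esym/(@addrI _ v); rewrite addr0 -h. Qed.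

Section Aux.
Variables (R : comNzRingType) (A : comAlgType R) (E : lmodType A).

Lemma half_zero (hQ : forall n : nat, exists y : R, n.+1%:R * y = 1) (v : E) : v + v = 0 -> v = 0.
Proof.
move=> H; have [y hy] := hQ 1%N.
have e : v = (y%:A + y%:A) *: v by rewrite -scalerDl -mulr2n -mulr_natl hy !scale1r.
by rewrite e scalerDl -scalerDr H scaler0.
Qed.

Lemma half_alg (hQ : forall n : nat, exists y : R, n.+1%:R * y = 1) (v : A) : v + v = 0 -> v = 0.
Proof.
move=> H; have [y hy] := hQ 1%N.
have e : v = (y%:A + y%:A) * v by rewrite -scalerDl -mulr2n -mulr_natl hy scale1r mul1r.
by rewrite e mulrDl -mulrDr H mulr0.
Qed.

Lemma ip0 (ip : E -> E -> A) : good_inner_product ip -> forall w, ip 0 w = 0 /\ ip w 0 = 0.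
Proof.
case=> hl hs _ _ _ w.
have e : ip 0 w = 0.
  have := hl 1 0 0 w; rewrite scaler0 addr0 mul1r.
  move/(congr1 (fun t => t - ip 0 w)) => /=; rewrite subrr addrK.
  by move=> ->.
by split=> //; rewrite hs.
Qed.

Lemma inC_zero (ip : E -> E -> A) : good_inner_product ip -> forall k, inC ip k zeroC.
Proof.
move=> hip [|[|k]] //=.
split=> //.
- by move=> s1 s2 x y r _; rewrite /scE scaler0 addr0.
exists (fun _ _ => 0); split.
- by move=> s _; split=> [r a b|a b]; rewrite ?scaler0 ?addr0 ?mulr0 ?mul0r ?addr0.
- by move=> a s1 s2 x y r _; rewrite scaler0 addr0.
- by move=> s u w _; rewrite (ip0 hip w).1 (ip0 hip u).2 addr0.
- by move=> s1 s2 x y u _; rewrite addr0 (ip0 hip u).1.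
Qed.
End Aux.


Theorem mainTheorem12 (R : comNzRingType) (A B : comAlgType R)
  (E : lmodType A) (F : lmodType B)
  (ipE : E -> E -> A) (ipF : F -> F -> B)
  (brE wdE : nat -> nat -> cochain E -> cochain E -> cochain E)
  (brF wdF : nat -> nat -> cochain F -> cochain F -> cochain F)
  (m : cochain E) (Phi : nat -> cochain E -> cochain F) :
  (forall n : nat, exists y : R, n.+1%:R * y = 1) ->
  fg_projective E -> fg_projective F ->
  good_inner_product ipE -> good_inner_product ipF ->
  isBracket ipE brE -> isWedge ipE brE wdE ->
  isBracket ipF brF -> isWedge ipF brF wdF ->
  isCourant ipE m ->
  isGPMorphism ipE ipF brE wdE brF wdF Phi ->
  let m' := Phi 3%N m in
  [/\ isCourant ipF m',
      isCourantMorphism ipE ipF m m' (fun a => c0 (Phi 0%N (mk0 E a)))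
                                     (fun x => c1 (Phi 1%N (mk1 x))),
      (forall k c, inC ipE k c -> brE 3%N k m c = zeroC ->
                   brF 3%N k m' (Phi k c) = zeroC) &
      (forall k b, inC ipE k b ->
         exists b', inC ipF k b' /\ Phi k.+1 (brE 3%N k m b) = brF 3%N k m' b')].
Proof.
move=> hQ _ _ hipE hipF HBE HWE HBF HWF [hm Jm] [Hin Hlin Hwd Hbr] m'.
have hm' : inC ipF 3 m' := Hin 3%N m hm.
have Pz : forall k, Phi k zeroC = zeroC.
  move=> k.
  have e : Defs.addC (scaleC 1 (@zeroC _ _ E)) zeroC = zeroC.
    rewrite /zeroC /Defs.addC /scaleC /=; f_equal; rewrite /scE ?scaler0 ?addr0 //.
  have := Hlin k zeroC zeroC 1 (inC_zero hipE k) (inC_zero hipE k).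
  rewrite e; case: (Phi k zeroC) => a x f /= [ea ex ef].
  rewrite /zeroC; f_equal.
  - by apply: self_add0; rewrite {1}ea scale1r.
  - by apply: self_add0; rewrite {1}ex scE1.
  - apply: functional_extensionality => s; apply: self_add0.
    by rewrite {1}(congr1 (fun g => g s) ef) /= scE1.
have Hwd' : forall r s k c d, k = (r+s)%N -> inC ipE r c -> inC ipE s d ->
    Phi k (wdE r s c d) = wdF r s (Phi r c) (Phi s d) by move=> r s k c d ->; exact: Hwd.
have Hbr' : forall r s k c d, k = (r+s-2)%N -> inC ipE r c -> inC ipE s d ->
    Phi k (brE r s c d) = brF r s (Phi r c) (Phi s d) by move=> r s k c d ->; exact: Hbr.
have M0 : brE 3 3 m m = zeroC.
  apply: (zero_eval (@cl _ _ _ _ _ HBE 3 3 m m 4 erefl hm hm)) => x y z.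
  have := Lm HBE x y z hm; rewrite /= => ->.
  by rewrite -Jm subrr addr0.
have M'0 : brF 3 3 m' m' = zeroC.
  by rewrite -(Hbr' 3%N 3%N 4%N m m erefl hm hm) M0 Pz.
set phi := fun a => c0 (Phi 0%N (mk0 E a)).
set psi := fun x => c1 (Phi 1%N (mk1 x)).
have hP0 : forall a, Phi 0%N (mk0 E a) = mk0 F (phi a).
  by move=> a; apply: eta0; apply: Hin; apply: mk0_in.
have hP1 : forall x, Phi 1%N (mk1 x) = mk1 (psi x).
  by move=> x; apply: eta1; apply: Hin; apply: mk1_in.
have hDE : forall x, inC ipE 2 (brE 3 1 m (mk1 x)).
  by move=> x; apply: (@cl _ _ _ _ _ HBE) => //; apply: mk1_in.
have hPD : forall x, Phi 2 (brE 3 1 m (mk1 x)) = brF 3 1 m' (mk1 (psi x)).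
  by move=> x; rewrite (Hbr' 3%N 1%N 2%N m _ erefl hm (mk1_in _ x)) hP1.
have hDF : forall x, inC ipF 2 (brF 3 1 m' (mk1 x)).
  by move=> x; apply: (@cl _ _ _ _ _ HBF) => //; apply: mk1_in.
split.
- split => // x y z.
  have := Lm HBF x y z hm'; rewrite /= M'0 /= => h.
  have hJ := half_zero hQ (esym h).
  by move/eqP: hJ; rewrite subr_eq0 => /eqP ->.
- split; split.
  + move=> r a b; rewrite /phi.
    have e : mk0 E (r *: a + b) = Defs.addC (scaleC r (mk0 E a)) (mk0 E b).
      by rewrite /mk0 /Defs.addC /scaleC /= /scE !scaler0 !addr0.
    by rewrite e Hlin //; apply: mk0_in.
  + move=> r x y; rewrite /psi.
    have e : mk1 (scE r x + y) = Defs.addC (scaleC r (mk1 x)) (mk1 y).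
      by rewrite /mk1 /Defs.addC /scaleC /= /scE !scaler0 !addr0.
    by rewrite e Hlin //; apply: mk1_in.
  + move=> a b; rewrite /phi.
    case: HWE => _ _ hw0E _; case: HWF => _ _ hw0F _.
    have [e1 _ _] := hw0E a b 0.
    rewrite -e1 (Hwd' 0%N 0%N 0%N _ _ erefl (mk0_in _ a) (mk0_in _ b)) !hP0.
    by have [-> _ _] := hw0F (phi a) (phi b) 0.
  + move=> a x; rewrite /psi.
    case: HWE => _ _ hw0E _; case: HWF => _ _ hw0F _.
    have [_ e1 _] := hw0E a a x.
    rewrite -e1 (Hwd' 0%N 1%N 1%N _ _ erefl (mk0_in _ a) (mk1_in _ x)) hP0 hP1.
    by have [_ -> _] := hw0F (phi a) (phi a) (psi x).
  + move=> x y; rewrite /psi.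
    have e : mk1 (cf m [:: x; y]) = brE 2 1 (brE 3 1 m (mk1 x)) (mk1 y).
      by rewrite (br2x HBE _ (hDE x)) (brins3 HBE _ hm).
    rewrite e (Hbr' 2%N 1%N 1%N _ _ erefl (hDE x) (mk1_in _ y)) hPD hP1.
    by rewrite (br2x HBF _ (hDF _)) (brins3 HBF _ hm').
  + move=> sig sig' hs hs' x a; rewrite /phi.
    have [_ [_ _ H20E _ _]] := HBE; have [_ [_ _ H20F _ _]] := HBF.
    have e : mk0 E (sig [:: x] a) = brE 2 0 (brE 3 1 m (mk1 x)) (mk0 E a).
      have hsy : isSymbol ipE 2 (cf (brE 3 1 m (mk1 x))) (fun s => sig (x :: s)).
        by rewrite (brins3 HBE _ hm); apply: sym_ins.
      by rewrite (H20E _ _ a (hDE x) hsy).1.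
    rewrite e (Hbr' 2%N 0%N 0%N _ _ erefl (hDE x) (mk0_in _ a)) hPD hP0.
    have hsy : isSymbol ipF 2 (cf (brF 3 1 m' (mk1 (psi x)))) (fun s => sig' (psi x :: s)).
      by rewrite (brins3 HBF _ hm'); apply: sym_ins.
    by rewrite (H20F _ _ (phi a) (hDF _) hsy).1.
  + move=> x y; rewrite /phi /psi.
    have [_ [_ H11E _ _ _]] := HBE; have [_ [_ H11F _ _ _]] := HBF.
    rewrite -H11E (Hbr' 1%N 1%N 0%N _ _ erefl (mk1_in _ x) (mk1_in _ y)) !hP1.
    by rewrite H11F.
- move=> k c hc e.
  by rewrite /m' -(Hbr' 3%N k k.+1 m c erefl hm hc) e Pz.
- move=> k b hb; exists (Phi k b); split; first exact: Hin.
  exact: Hbr'.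
Qed.
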